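(* Let $\varphi$ be a flow on a locally compact metric space $X$, let $S\subset X$ be a nonempty compact invariant set, and let $\mathcal M=\{M_p\mid p\in\mathbb P\}$ be a finite indexed family of mutually disjoint isolated invariant sets in $S$. The following are equivalent: (i) $\mathcal M$ is a Morse predecomposition of $S$; (ii) there exists a family $\{N_p\mid p\in\mathbb P\}$ of mutually disjoint isolating neighborhoods in $S$ such that $M_p=\operatorname{Inv}N_p$ for every $p$, and for every full solution $\gamma$ in $S$ there exist $p,q\in\mathbb P$ such that $\gamma$ wades through $N_p$ in minus infinity and wades through $N_q$ in plus infinity.
   Context: A full solution is a map $\gamma:\mathbb R\to X$ with $\gamma(s+t)=\varphi(\gamma(s),t)$; it is in $S$ if its image lies in $S$. $\alpha(\gamma)=\bigcap_{t<0}\operatorname{cl}\gamma((-\infty,t])$, $\omega(\gamma)=\bigcap_{t>0}\operatorname{cl}\gamma([t,\infty))$. $\operatorname{Inv}N=\{x\in N\mid\varphi(x,\mathbb R)\subset N\}$; invariant means $\operatorname{Inv}$ of itself. Isolating neighborhoods and isolated invariant sets ''in $S$'' refer to the flow restricted to $S$: a compact $N\subset S$ is an isolating neighborhood if $\operatorname{Inv}N\subset\operatorname{int}_S N$; isolated invariant sets are those of the form $\operatorname{Inv}N$ for such $N$. A full solution $\gamma$ in $S$ is a link from $S_1$ to $S_2$ if $\alpha(\gamma)\cap S_1\ne\emptyset\ne\omega(\gamma)\cap S_2$. A Morse predecomposition of $S$ is an indexed family of mutually disjoint closed invariant subsets $\{M_p\mid p\in\mathbb P\}$ of $S$ such that every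 full solution in $S$ is a link from $M_p$ to $M_q$ for some $p,q$. A full solution $\gamma$ wades through $N$ in plus infinity if there are real sequences $(t^-_n),(t^+_n)$ with $t^-_n\to+\infty$, $t^+_n-t^-_n\to+\infty$ and $\gamma([t^-_n,t^+_n])\subset N$ for all $n$; it wades through $N$ in minus infinity if there are such sequences with $t^+_n\to-\infty$, $t^+_n-t^-_n\to+\infty$ and $\gamma([t^-_n,t^+_n])\subset N$ for all $n$. *)

(* Defs.v *)
From HB Require Import structures.
From mathcomp Require Import all_boot all_order all_algebra.
From mathcomp Require Import all_classical all_reals all_analysis.
Set Implicit Arguments. Unset Strict Implicit. Unset Printing Implicit Defensive.
Import Order.TTheory GRing.Theory Num.Theory.
Import numFieldTopology.Exports.
Local Open Scope classical_set_scope.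
Local Open Scope ring_scope.

Section Flows.
Context {R : realType} {X : topologicalType}.

Definition is_flow (phi : X -> R -> X) : Prop :=
  [/\ continuous (fun p : X * R => phi p.1 p.2),
      (forall x, phi x 0 = x) &
      (forall x s t, phi (phi x s) t = phi x (s + t))].

Definition full_solution (phi : X -> R -> X) (gamma : R -> X) : Prop :=
  forall s t, gamma (s + t) = phi (gamma s) t.

Definition full_solution_in (phi : X -> R -> X) (S : set X) (gamma : R -> X) : Prop :=
  full_solution phi gamma /\ (forall t, S (gamma t)).

Definition alpha_limit (gamma : R -> X) : set X :=
  \bigcap_(t in [set t : R | t < 0]) closure (gamma @` [set s | s <= t]).

Definition omega_limit (gamma : R -> X) : set X :=
  \bigcap_(t in [set t : R | 0 < t]) closure (gamma @` [set s | t <= s]).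

Definition InvN (phi : X -> R -> X) (N : set X) : set X :=
  [set x | N x /\ forall t, N (phi x t)].

Definition flow_invariant (phi : X -> R -> X) (A : set X) : Prop := InvN phi A = A.

Definition rel_interior (S N : set X) : set X :=
  [set x | exists U : set X, [/\ open U, U x & U `&` S `<=` N]].

Definition isolating_nbhd_in (phi : X -> R -> X) (S N : set X) : Prop :=
  [/\ compact N, N `<=` S & InvN phi N `<=` rel_interior S N].

Definition isolated_invariant_in (phi : X -> R -> X) (S M : set X) : Prop :=
  exists N, isolating_nbhd_in phi S N /\ M = InvN phi N.

Definition is_link (gamma : R -> X) (S1 S2 : set X) : Prop :=
  alpha_limit gamma `&` S1 !=set0 /\ omega_limit gamma `&` S2 !=set0.

Definition mutually_disjoint {P : Type} (M : P -> set X) : Prop :=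
  forall p q, p <> q -> M p `&` M q = set0.

Definition Morse_predecomposition (phi : X -> R -> X) (S : set X)
    {P : Type} (M : P -> set X) : Prop :=
  [/\ mutually_disjoint M,
      (forall p, closed (M p) /\ flow_invariant phi (M p) /\ M p `<=` S) &
      (forall gamma, full_solution_in phi S gamma ->
         exists p q, is_link gamma (M p) (M q))].

Definition wades_plus (gamma : R -> X) (N : set X) : Prop :=
  exists tm tp : nat -> R,
    tm @ \oo --> +oo /\ (fun n => tp n - tm n) @ \oo --> +oo /\
    forall n t, tm n <= t <= tp n -> N (gamma t).

Definition wades_minus (gamma : R -> X) (N : set X) : Prop :=
  exists tm tp : nat -> R,
    tp @ \oo --> -oo /\ (fun n => tp n - tm n) @ \oo --> +oo /\
    forall n t, tm n <= t <= tp n -> N (gamma t).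

End Flows.

(* Main.v *)
Require Import Defs.
From HB Require Import structures.
From mathcomp Require Import all_boot all_order all_algebra.
From mathcomp Require Import all_classical all_reals all_analysis.
From mathcomp Require Import lra.
Import Order.TTheory GRing.Theory Num.Theory.
Import numFieldTopology.Exports.
Local Open Scope classical_set_scope.
Local Open Scope ring_scope.
Section L.
Context {R : realType} {X : metricType R} (phi : X -> R -> X) (Hf : is_flow phi).

Lemma joint_near y t U : nbhs (phi y t) U ->
  \forall x \near y & s \near t, U (phi x s).
Proof.
case: Hf => cts _ _ HU.
exact: (cts (y, t) U HU).
Qed.

Lemma sec_near y t U : nbhs (phi y t) U -> \forall x \near y, U (phi x t).
Proof.
move=> /joint_near; rewrite /prop_near2 => -[[A B] /= [Ay Bt] sub].
apply: filterS Ay => x Ax; apply: (sub (x, t)); split => //; exact: nbhs_singleton.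
Qed.

Lemma sec_cont t : continuous (fun x => phi x t).
Proof. by move=> x U /sec_near. Qed.

Lemma InvN_phi N x t : InvN phi N x -> InvN phi N (phi x t).
Proof.
case: Hf => _ _ Hc; rewrite /InvN /= => -[Nx Hx]; split => // s; by rewrite Hc.
Qed.

Lemma InvN_closed N : closed N -> closed (InvN phi N).
Proof.
move=> cN.
have -> : InvN phi N = \bigcap_(t in setT) ((fun x => phi x t) @^-1` N).
  case: Hf => _ H0 _.
  apply/seteqP; split => x.
    by case=> _ H t _.
  move=> H; split; last by move=> t; exact: H.
  by rewrite -(H0 x); exact: H.
apply: closed_bigI => t _; apply: preimage_closed => //.
by move=> x _; exact: sec_cont.
Qed.


Lemma tube S N y (n : R) : (forall x t, S x -> S (phi x t)) -> (forall t, rel_interior S N (phi y t)) ->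
  \forall x \near y, S x -> forall t, -n <= t <= n -> N (phi x t).
Proof.
move=> HS Hint.
have cK := @segment_compact R (-n) n; rewrite compact_near_coveringP in cK.
have : \forall x \near y, `[-n, n] `<=` (fun t => S x -> N (phi x t)).
  apply: (cK X (nbhs y) (fun i t => S i -> N (phi i t))) => t _.
  have [U [oU Uy US]] := Hint t.
  have := joint_near y t U (open_nbhs_nbhs (conj oU Uy)).
  rewrite /prop_near2 => -[[A B] /= [Ay Bt] sub].
  exists (B, A) => //= -[s x] /= [Bs Ax] Sx; apply: US; split => //; last exact: HS.
  exact: (sub (x, s)).
move=> H; apply: (filterS _ H) => x Hx Sx t Ht; apply: Hx => //; by rewrite /= in_itv /=.
Qed.


Lemma wade_plus S N gamma y : (forall x t, S x -> S (phi x t)) ->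
  full_solution phi gamma -> (forall t, S (gamma t)) -> omega_limit gamma y ->
  (forall t, rel_interior S N (phi y t)) -> wades_plus gamma N.
Proof.
move=> HS Hg Sg Hy Hint.
have H (n : nat) : exists s : R, (n%:R * 2 + 1 <= s) /\
    forall t, -(n%:R) <= t <= n%:R -> N (gamma (s + t)).
  have V := tube _ _ _ n%:R HS Hint.
  have := Hy (n%:R * 2 + 1) _ _ V.
  case; first by rewrite /=; have := ler0n R n; lra.
  move=> _ [[s Hs <-] Vs]; exists s; split => // t Ht.
  rewrite Hg; exact: Vs.
have [f Hf'] := choice H.
exists (fun n => f n - n%:R), (fun n => f n + n%:R); split; [|split].
- apply: (@ger_cvgy _ _ _ _ (fun n : nat => (n%:R : R))); last exact: cvgr_idn.
  apply: nearW => n /=; have := (Hf' n).1; lra.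
- apply: (@ger_cvgy _ _ _ _ (fun n : nat => (n%:R : R))); last exact: cvgr_idn.
  apply: nearW => n /=; have := ler0n R n; lra.
- move=> n t /andP [h1 h2]; have := (Hf' n).2 (t - f n).
  have -> : f n + (t - f n) = t by rewrite addrC subrK.
  apply; apply/andP; split; lra.
Qed.

Lemma wade_minus S N gamma y : (forall x t, S x -> S (phi x t)) ->
  full_solution phi gamma -> (forall t, S (gamma t)) -> alpha_limit gamma y ->
  (forall t, rel_interior S N (phi y t)) -> wades_minus gamma N.
Proof.
move=> HS Hg Sg Hy Hint.
have H (n : nat) : exists s : R, (s <= - (n%:R * 2 + 1)) /\
    forall t, -(n%:R) <= t <= n%:R -> N (gamma (s + t)).
  have V := tube _ _ _ n%:R HS Hint.
  have := Hy (- (n%:R * 2 + 1)) _ _ V.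
  case; first by rewrite /=; have := ler0n R n; lra.
  move=> _ [[s Hs <-] Vs]; exists s; split => // t Ht.
  rewrite Hg; exact: Vs.
have [f Hf'] := choice H.
exists (fun n => f n - n%:R), (fun n => f n + n%:R); split; [|split].
- apply/cvgNry.
  apply: (@ger_cvgy _ _ _ _ (fun n : nat => (n%:R : R))); last exact: cvgr_idn.
  apply: nearW => n /=; change (n%:R <= - (f n + n%:R) :> R); have := (Hf' n).1; have := ler0n R n; lra.
- apply: (@ger_cvgy _ _ _ _ (fun n : nat => (n%:R : R))); last exact: cvgr_idn.
  apply: nearW => n /=; have := ler0n R n; lra.
- move=> n t /andP [h1 h2]; have := (Hf' n).2 (t - f n).
  have -> : f n + (t - f n) = t by rewrite addrC subrK.
  apply; apply/andP; split; lra.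
Qed.


Lemma wade_cluster N gamma (c h : nat -> R) : full_solution phi gamma ->
  compact N -> h @ \oo --> +oo ->
  (forall n t, -(h n) <= t <= h n -> N (gamma (c n + t))) ->
  exists y, InvN phi N y /\
    forall B, nbhs y B -> forall m, exists n, (m <= n)%N /\ B (gamma (c n)).
Proof.
move=> Hg cN hoo HN.
have cl : closed N := compact_closed (@metric_hausdorff _ X) cN.
pose F := (fun n => gamma (c n)) @ \oo.
have FA m t : F [set x | exists n, (m <= n)%N /\ -(h n) <= t <= h n /\ x = gamma (c n)].
  have [m1 _ Hm1] := proj1 (cvgryPge h) hoo `|t|.
  exists (maxn m m1) => // n /=; rewrite geq_max => /andP [h1 h2].
  exists n; split => //; split => //.
  have := Hm1 n h2; rewrite /=.
  move=> H; apply/andP; split.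
    by rewrite lerNl; apply: le_trans H; rewrite -normrN ler_norm.
  by apply: le_trans H; rewrite ler_norm.
have FN : F N.
  apply: filterS (FA 0%N 0) => x [n [_ [Hn ->]]].
  by have := HN n 0 Hn; rewrite addr0.
have [y [Ny cly]] := cN F _ FN.
exists y; split.
- split => // t; apply: cl => B HB.
  have [x [[n [_ [Ht ->]]] Bx]] := cly _ _ (FA 0%N t) (sec_near y t B HB).
  exists (phi (gamma (c n)) t); split => //; rewrite -Hg; exact: HN.
- move=> B HB m; have [x [[n [Hn [_ ->]]] Bx]] := cly _ _ (FA m 0) HB.
  by exists n.
Qed.


Lemma omega_of_wade N gamma : full_solution phi gamma -> compact N ->
  wades_plus gamma N -> exists y, omega_limit gamma y /\ InvN phi N y.
Proof.
move=> Hg cN [tm [tp [Htm [Hd HN]]]].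
have hoo : (fun n => (tp n - tm n) / 2) @ \oo --> +oo.
  apply/cvgryPge => A; have := proj1 (cvgryPge _) Hd (2 * A).
  by case=> m _ Hm; exists m => // n /Hm /=; lra.
have HN' n t : -((tp n - tm n) / 2) <= t <= (tp n - tm n) / 2 ->
    N (gamma ((tm n + tp n) / 2 + t)).
  move=> /andP [h1 h2]; apply: HN; apply/andP; split; lra.
have [y [Iy Hy]] := wade_cluster N gamma _ _ Hg cN hoo HN'.
exists y; split => // t /= t0 B HB.
have [m1 _ H1] := proj1 (cvgryPge _) Htm t.
have [m2 _ H2] := proj1 (cvgryPge _) hoo 0.
have [n [Hn Bn]] := Hy B HB (maxn m1 m2).
move: Hn; rewrite geq_max => /andP [n1 n2].
exists (gamma ((tm n + tp n) / 2)); split => //; exists ((tm n + tp n) / 2) => //=.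
have := H1 n n1; have := H2 n n2; rewrite /=; lra.
Qed.

Lemma alpha_of_wade N gamma : full_solution phi gamma -> compact N ->
  wades_minus gamma N -> exists y, alpha_limit gamma y /\ InvN phi N y.
Proof.
move=> Hg cN [tm [tp [Htp [Hd HN]]]].
have hoo : (fun n => (tp n - tm n) / 2) @ \oo --> +oo.
  apply/cvgryPge => A; have := proj1 (cvgryPge _) Hd (2 * A).
  by case=> m _ Hm; exists m => // n /Hm /=; lra.
have HN' n t : -((tp n - tm n) / 2) <= t <= (tp n - tm n) / 2 ->
    N (gamma ((tm n + tp n) / 2 + t)).
  move=> /andP [h1 h2]; apply: HN; apply/andP; split; lra.
have [y [Iy Hy]] := wade_cluster N gamma _ _ Hg cN hoo HN'.
exists y; split => // t /= t0 B HB.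
have [m1 _ H1] := proj1 (cvgrNyPle _) Htp t.
have [m2 _ H2] := proj1 (cvgryPge _) hoo 0.
have [n [Hn Bn]] := Hy B HB (maxn m1 m2).
move: Hn; rewrite geq_max => /andP [n1 n2].
exists (gamma ((tm n + tp n) / 2)); split => //; exists ((tm n + tp n) / 2) => //=.
have := H1 n n1; have := H2 n n2; rewrite /=; lra.
Qed.

End L.

Lemma separation {R : realType} {X : metricType R} (A B : set X) :
  compact A -> closed B -> A `&` B = set0 ->
  \forall e \near (0 : R)^'+, forall a x, A a -> ball a e x -> ~ B x.
Proof.
move=> cA cB AB.
have := (compact_near_coveringP A).1 cA R ((0 : R)^'+)
  (fun e a => forall x, ball a e x -> ~ B x) _.
have Hc : forall a, A a -> \forall a' \near a & e \near (0 : R)^'+,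
    forall x, ball a' e x -> ~ B x.
  move=> a Aa.
  have : nbhs a (~` B).
    apply: open_nbhs_nbhs; split; first by rewrite openC.
    by move=> Ba; rewrite -subset0 in AB; exact: (AB a).
  move=> /nbhs_ballP [d /= d0 Hd].
  exists (ball a (d / 2), [set e | e < d / 2]) => /=.
    split; first by apply: nbhsx_ballx; lra.
    by apply: nbhs_right_lt; lra.
  move=> [a' e] /= [Ha' He] x Hx; apply: Hd.
  apply: (@le_ball _ _ _ (d / 2 + e)); first lra.
  exact: ball_triangle Ha' Hx.
move=> /(_ _ Hc) H.
move: H; apply: filterS => e He a x Aa; exact: He.
Qed.
Theorem theorem5p22 (R : realType) (X : metricType R) (phi : X -> R -> X)
    (S : set X) (P : finType) (M : P -> set X) :
  locally_compact [set: X] ->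
  is_flow phi ->
  S !=set0 -> compact S -> flow_invariant phi S ->
  mutually_disjoint M ->
  (forall p, isolated_invariant_in phi S (M p)) ->
  (Morse_predecomposition phi S M <->
   exists N : P -> set X,
     [/\ mutually_disjoint N,
         (forall p, isolating_nbhd_in phi S (N p)),
         (forall p, M p = InvN phi (N p)) &
         (forall gamma, full_solution_in phi S gamma ->
            exists p q, wades_minus gamma (N p) /\ wades_plus gamma (N q))]).
Proof.
move=> _ Hf _ _ HSinv disjM Hiso.
have HS : forall x t, S x -> S (phi x t).
  move=> x t Sx; have [_ H] : InvN phi S x by rewrite HSinv.
  exact: H.
have InvInv N : InvN phi (InvN phi N) = InvN phi N.
  apply/seteqP; split => x; first by case.
  by move=> Hx; split => // t; exact: InvN_phi.
have hX := @metric_hausdorff R X.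
split.
- case=> _ Hcl Hlink.
  have [N0 HN0] := choice Hiso.
  have cM p : compact (M p).
    rewrite (HN0 p).2; case: (HN0 p).1 => cN _ _.
    apply: (subclosed_compact _ cN); last by move=> x [].
    by apply: (InvN_closed phi Hf); exact: compact_closed.
  have Hsep : \forall e \near (0:R)^'+, forall pq : P * P, pq.1 <> pq.2 ->
      forall a x, M pq.1 a -> ball a e x -> ~ M pq.2 x.
    apply: filter_forall => -[p q] /=.
    case: (eqVneq p q) => [->|/eqP pq].
      by apply: nearW => e H; exfalso; exact: H.
    have := separation _ _ (cM p) (Hcl q).1 (disjM p q pq).
    by move=> H; apply: (filterS _ H) => e He _.
  have [e [/= e0 He]] := filter_ex (filterI (nbhs_right_gt 0) Hsep).
  have [r r0 Hr] : exists2 r : R, 0 < r & forall p q, p <> q ->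
      forall a x, M p a -> ball a (4 * r) x -> ~ M q x.
    exists (e / 4); first lra.
    move=> p q pq a x Ma; have -> : 4 * (e / 4) = e by lra.
    exact: (He (p, q) pq).
  have MpInv p x t : M p x -> M p (phi x t).
    by rewrite (HN0 p).2; exact: InvN_phi.
  have Dc p x : M p x -> closure (\bigcup_(m in M p) ball m r) x.
    by move=> Mx; apply: subset_closure; exists x => //; exact: ballxx.
  have MInv p : M p = InvN phi (N0 p `&` closure (\bigcup_(m in M p) ball m r)).
    apply/seteqP; split => x.
      move=> Mx; have := Mx; rewrite {1}(HN0 p).2 => -[N0x HN0x].
      split; first by split => //; exact: Dc.
      by move=> t; split; [exact: HN0x | exact/Dc/MpInv].
    move=> [[N0x _] H]; rewrite (HN0 p).2; split => // t; exact: (H t).1.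
  have Hrel p x : M p x ->
      rel_interior S (N0 p `&` closure (\bigcup_(m in M p) ball m r)) x.
    move=> Mx; case: (HN0 p).1 => _ _ HI.
    have Ix : InvN phi (N0 p) x by rewrite -(HN0 p).2.
    have [U [oU Ux US]] := HI x Ix.
    exists (U `&` interior (ball x r)); split.
    + exact: openI oU (@open_interior _ _).
    + by split => //; exact: nbhsx_ballx.
    + move=> z [[Uz Iz] Sz]; split; first exact: US.
      by apply: subset_closure; exists x => //; exact: interior_subset.
  exists (fun p => N0 p `&` closure (\bigcup_(m in M p) ball m r)); split.
  + move=> p q pq; apply/seteqP; split => x // [[_ Dp] [_ Dq]].
    have [z [[m Mm bz] xz]] := Dp _ (nbhsx_ballx x r r0).
    have [z' [[m' Mm' bz'] xz']] := Dq _ (nbhsx_ballx x r r0).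
    apply: (Hr p q pq m m' Mm _ Mm').
    apply: (@le_ball _ _ _ (r + r + r + r)); first lra.
    apply: ball_triangle (ball_sym bz'); apply: ball_triangle xz'.
    exact: ball_triangle bz (ball_sym xz).
  + move=> p; split.
    * apply: compact_closedI; first by case: (HN0 p).1.
      exact: closed_closure.
    * by move=> x [N0x _]; case: (HN0 p).1 => _ + _; apply.
    * by rewrite -MInv; exact: Hrel.
  + exact: MInv.
  + move=> gamma Hg.
    have [p [q [[y [ay My]] [z [oz Mz]]]]] := Hlink gamma Hg.
    exists p, q; split.
    * apply: (wade_minus phi Hf _ _ _ _ HS Hg.1 Hg.2 ay) => t.
      exact/Hrel/MpInv.
    * apply: (wade_plus phi Hf _ _ _ _ HS Hg.1 Hg.2 oz) => t.
      exact/Hrel/MpInv.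
- case=> N [disjN HNiso HMN Hw]; split => //.
  + move=> p; rewrite HMN; split; [|split].
    * apply: (InvN_closed phi Hf); apply: compact_closed => //.
      by case: (HNiso p).
    * exact: InvInv.
    * by move=> x [Nx _]; case: (HNiso p) => _ + _; apply.
  + move=> gamma Hg; have [p [q [wm wp]]] := Hw gamma Hg.
    exists p, q; split.
    * have cN : compact (N p) by case: (HNiso p).
      have [y [ay Iy]] := alpha_of_wade phi Hf _ _ Hg.1 cN wm.
      by exists y; split => //; rewrite HMN.
    * have cN : compact (N q) by case: (HNiso q).
      have [y [oy Iy]] := omega_of_wade phi Hf _ _ Hg.1 cN wp.
      by exists y; split => //; rewrite HMN.
Qed.
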